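(* Let $A$ be any subset of ${}^\omega\omega$, equipped with the restriction of the usual ultrametric of ${}^\omega\omega$, and let $Y$ be a separable metrizable space. If $f:A\to Y$ is of Baire class $1$, then there is a sequence of full functions $f_k:A\to Y$ converging pointwise to $f$.
   Context: Work in ZF plus countable choice over the reals. ${}^\omega\omega$ is the Baire space with ultrametric $d'(x,y)=2^{-n}$, $n$ least with $x(n)\ne y(n)$. $f:A\to Y$ is of Baire class $1$ if $f^{-1}(U)\in\mathbf{\Sigma}^0_2(A)$ for every open $U\subseteq Y$. A set $B\subseteq A$ is full with constant $r>0$ if $\{y\in A: d'(x,y)<r\}\subseteq B$ for all $x\in B$; a function $g:A\to Y$ is full if it takes only finitely many values and the preimage of each value is full (with some constant). *)

(* Defs.v *)
From HB Require Import structures.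
From mathcomp Require Import all_boot all_order all_algebra.
From mathcomp Require Import all_classical all_reals all_analysis.
Unset Implicit Arguments. Unset Printing Implicit Defensive.
Import Order.TTheory GRing.Theory Num.Theory.
Local Open Scope classical_set_scope.
Local Open Scope ring_scope.

Definition baire := nat -> nat.

Definition baire_dist (R : realType) (x y : baire) : R :=
  match pselect (exists n, x n != y n) with
  | left h => (2^-1) ^+ (ex_minn h)
  | right _ => 0
  end.

Definition rel_closed (R : realType) (A C : set baire) : Prop :=
  forall x, A x ->
    (forall r : R, 0 < r -> exists y, C y /\ A y /\ baire_dist R x y < r) -> C x.

Definition Sigma02_in (R : realType) (A B : set baire) : Prop :=
  exists F : nat -> set baire,
    (forall n, F n `<=` A /\ rel_closed R A (F n)) /\ B = \bigcup_n F n.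

(* f : A -> Y is of Baire class 1 (f is given on all of baire; only A matters). *)
Definition baire_class1 (R : realType) (Y : topologicalType) (A : set baire)
    (f : baire -> Y) : Prop :=
  forall U : set Y, open U -> Sigma02_in R A (A `&` f @^-1` U).

Definition full_set_with (R : realType) (A B : set baire) (r : R) : Prop :=
  0 < r /\ forall x, B x -> forall y, A y -> baire_dist R x y < r -> B y.

Definition full_fun (R : realType) (Y : Type) (A : set baire) (g : baire -> Y) : Prop :=
  finite_set (g @` A) /\
  forall v, (g @` A) v ->
    exists r : R, full_set_with R A (A `&` g @^-1` [set v]) r.

(* Separable metrizable space: a Hausdorff pseudometric space (= metric space)
   with a countable dense subset. *)
Definition separable (Y : topologicalType) : Prop :=
  exists D : set Y, countable D /\ dense D.

(* Main.v *)
Require Import Defs.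
From HB Require Import structures.
From mathcomp Require Import all_boot all_order all_algebra.
From mathcomp Require Import all_classical all_reals all_analysis.
From mathcomp Require Import lra zify.
Import Order.TTheory GRing.Theory Num.Theory.
Local Open Scope classical_set_scope.
Local Open Scope ring_scope.



Lemma q_gt0 (R : realType) : 0 < ((2:R)^-1). Proof. by rewrite invr_gt0. Qed.
Lemma q_lt1 (R : realType) : ((2:R)^-1) < 1. Proof. by rewrite invf_lt1 // ltr1n. Qed.

Lemma qexp_lt (R : realType) m n : (((2:R)^-1) ^+ m < ((2:R)^-1) ^+ n) = (n < m)%N.
Proof. by rewrite ltr_iXn2l // ?q_gt0 ?q_lt1. Qed.

Lemma qexp_small (R : realType) (r : R) : 0 < r -> exists n, ((2:R)^-1) ^+ n < r.
Proof.
move=> r0.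
have qn : `|((2:R)^-1)| < 1 by rewrite gtr0_norm ?q_gt0 ?q_lt1.
have := (@cvgr0Pnorm_lt _ _ _ _ _ (fun n => ((2:R)^-1) ^+ n)).1 (@cvg_expr R ((2:R)^-1) qn) r r0.
case=> N _ HN; exists N; have := HN N (leqnn N).
by rewrite /= ger0_norm // exprn_ge0 // ltW // (q_gt0 R).
Qed.

Lemma dist_agree (R : realType) (x y : baire) k :
  baire_dist R x y < ((2:R)^-1) ^+ k -> forall n, (n <= k)%N -> x n = y n.
Proof.
rewrite /baire_dist; case: pselect => [h|nh].
  case: ex_minnP => m xm minm; rewrite qexp_lt => km n nk.
  apply/eqP; apply: contraTT km => xn; rewrite -leqNgt.
  exact: leq_trans (minm _ xn) nk.
move=> _ n _; apply/eqP; apply: contra_notT nh => xn; by exists n.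
Qed.

Lemma agree_dist (R : realType) (x y : baire) k :
  (forall n, (n <= k)%N -> x n = y n) -> baire_dist R x y < ((2:R)^-1) ^+ k.
Proof.
move=> ag; rewrite /baire_dist; case: pselect => [h|nh].
  case: ex_minnP => m xm minm; rewrite qexp_lt ltnNge.
  by apply/negP => mk; move: xm; rewrite ag // eqxx.
by rewrite exprn_gt0 // q_gt0.
Qed.

Definition nearS (k : nat) (x : baire) (S : set baire) : Prop :=
  exists y, S y /\ forall n, (n <= k)%N -> x n = y n.

Definition Jf (G : nat -> nat -> set baire) (N : set baire -> Prop) k M : nat :=
  find (fun j => `[< N (G M j) >]) (iota 0 k.+1).

Definition goodb (R : realType) (Y : pseudoMetricType R) (c : nat -> Y) G N k M : bool :=
  `[< forall a, (a <= M)%N ->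
      ball (c (Jf G N k a)) (2 * (2:R)^-1 ^+ a) (c (Jf G N k M)) >].

Definition Mk (R : realType) (Y : pseudoMetricType R) (c : nat -> Y) G N k : nat :=
  (k - find (fun d => goodb R Y c G N k (k - d)) (iota 0 k.+1))%N.

Definition outv (R : realType) (Y : pseudoMetricType R) (c : nat -> Y) G N k : Y :=
  c (Jf G N k (Mk R Y c G N k)).

Lemma find_iota_spec (p : pred nat) n j : p j -> (j < n)%N ->
  (find p (iota 0 n) <= j)%N /\ p (find p (iota 0 n)).
Proof.
move=> pj jn.
have hs : has p (iota 0 n) by apply/hasP; exists j => //; rewrite mem_iota.
have fl : (find p (iota 0 n) < n)%N by rewrite -[X in (_ < X)%N](size_iota 0 n) -has_find.
split.
  rewrite leqNgt; apply/negP => lt; have := before_find 0 lt.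
  by rewrite nth_iota ?add0n ?pj // (ltn_trans lt fl).
by have := nth_find 0 hs; rewrite nth_iota ?add0n.
Qed.

Lemma find_iota_le (p : pred nat) n : (find p (iota 0 n) <= n)%N.
Proof. by rewrite -[X in (_ <= X)%N](size_iota 0 n) find_size. Qed.

Lemma nearS_agree k x y : (forall n, (n <= k)%N -> x n = y n) -> nearS k x = nearS k y.
Proof.
move=> ag; apply/funext => S; apply/propext; split => -[z [Sz hz]]; exists z; split => // n nk.
  by rewrite -ag // hz.
by rewrite ag // hz.
Qed.

Lemma nearS_mono k k' x S : (k' <= k)%N -> nearS k x S -> nearS k' x S.
Proof. by move=> kk [z [Sz hz]]; exists z; split => // n nk; apply: hz; exact: leq_trans kk. Qed.

Lemma nearS_self k x (S : set baire) : S x -> nearS k x S.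
Proof. by move=> Sx; exists x. Qed.

Lemma ev_not_near (R : realType) (A S : set baire) x : A x -> ~ S x -> S `<=` A ->
  rel_closed R A S -> exists K, forall k, (K <= k)%N -> ~ nearS k x S.
Proof.
move=> Ax nSx SA cl.
suff [K hK] : exists K, ~ nearS K x S.
  by exists K => k Kk nk; apply: hK; exact: nearS_mono nk.
apply: contrapT => hall; apply: nSx; apply: cl => // r r0.
have [K hK] := qexp_small R r r0.
have : nearS K x S by apply: contrapT => nn; apply: hall; exists K.
case=> y [Sy ag]; exists y; split => //; split; first exact: SA.
by apply: lt_trans hK; apply: agree_dist.
Qed.

Lemma ev_all (P : nat -> nat -> Prop) N :
  (forall j, (j < N)%N -> exists K, forall k, (K <= k)%N -> P j k) ->
  exists K, forall k, (K <= k)%N -> forall j, (j < N)%N -> P j k.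
Proof.
elim: N => [|N IH] h; first by exists 0%N.
have [K1 h1] := IH (fun j jN => h j (ltnW (leq_trans jN (leqnn _)))).
have [K2 h2] := h N (ltnSn N).
exists (maxn K1 K2) => k kk j; rewrite ltnS leq_eqVlt => /orP[/eqP->|jN].
  by apply: h2; exact: leq_trans (leq_maxr _ _) kk.
by apply: h1 => //; exact: leq_trans (leq_maxl _ _) kk.
Qed.

Lemma ev_correct (R : realType) (A : set baire) (G : nat -> nat -> set baire) x M :
  A x -> (forall M j, G M j `<=` A /\ rel_closed R A (G M j)) ->
  (exists j, G M j x) ->
  exists K, forall k, (K <= k)%N -> G M (Jf G (nearS k x) k M) x.
Proof.
move=> Ax hG [j0 Gj0].
have ex : exists j, `[< G M j x >] by exists j0; apply/asboolP.
case: (ex_minnP ex) => js /asboolP Gjs minjs.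
have nG : forall j, (j < js)%N -> ~ G M j x.
  by move=> j jl Gj; have := minjs j (asboolT Gj); rewrite leqNgt jl.
have [K1 hK1] := @ev_all (fun j k => ~ nearS k x (G M j)) js (fun j jl =>
  ev_not_near R A (G M j) x Ax (nG j jl) (hG M j).1 (hG M j).2).
exists (maxn K1 js) => k kK.
have [] := @find_iota_spec (fun j => `[< nearS k x (G M j) >]) k.+1 js.
- by apply/asboolP; exact: nearS_self.
- by rewrite ltnS; exact: leq_trans (leq_maxr _ _) kK.
rewrite /Jf; set J := find _ _ => Jjs /asboolP nJ.
case: (ltnP J js) => [lt|ge].
  by exfalso; apply: (hK1 k (leq_trans (leq_maxl _ _) kK) J lt).
by have -> : J = js by apply/eqP; rewrite eqn_leq Jjs ge.
Qed.

Lemma conv_main (R : realType) (Y : pseudoMetricType R) (A : set baire) (f : baire -> Y)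
  (c : nat -> Y) (G : nat -> nat -> set baire) x :
  A x -> (forall M j, G M j `<=` A /\ rel_closed R A (G M j)) ->
  (forall M, exists j, G M j x) ->
  (forall M j, G M j x -> ball (c j) ((2:R)^-1 ^+ M) (f x)) ->
  outv R Y c G (nearS k x) k @[k --> \oo] --> f x.
Proof.
move=> Ax hG hcov hball; apply/cvg_ballP => eps eps0.
have [M0 hM0] := qexp_small R (eps / 3) ltac:(by rewrite divr_gt0).
have [K hK] := @ev_all (fun a k => G a (Jf G (nearS k x) k a) x) M0.+1
  (fun a _ => ev_correct R A G x a Ax hG (hcov a)).
exists (maxn K M0) => // k /= kK.
set N := nearS k x.
have hb : forall a, (a <= M0)%N -> ball (c (Jf G N k a)) ((2:R)^-1 ^+ a) (f x).
  by move=> a aM; apply: hball; apply: hK; [exact: leq_trans (leq_maxl _ _) kK|].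
have q0 := q_gt0 R.
have gM0 : goodb R Y c G N k M0.
  apply/asboolP => a aM.
  have qa : (2:R)^-1 ^+ M0 <= (2:R)^-1 ^+ a.
    exact: (ler_wiXn2l (ltW q0) (ltW (q_lt1 R)) aM).
  apply: le_ball (ball_triangle (hb a aM) (ball_sym (hb M0 (leqnn _)))).
  lra.
have M0k : (M0 <= k)%N by exact: leq_trans (leq_maxr _ _) kK.
have [] := @find_iota_spec (fun d => goodb R Y c G N k (k - d)) k.+1 (k - M0).
- by rewrite subKn.
- by rewrite ltnS leq_subr.
set D := find _ _ => Dle gD.
have MkE : Mk R Y c G N k = (k - D)%N by [].
have hM : (M0 <= k - D)%N by lia.
move/asboolP: gD => /(_ M0 hM) hg.
rewrite /outv MkE.
have := ball_triangle (ball_sym (hb M0 (leqnn _))) hg.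
apply: le_ball.
have : (2:R)^-1 ^+ M0 < eps / 3 by [].
lra.
Qed.

Lemma full_main (R : realType) (Y : pseudoMetricType R) (A : set baire)
  (c : nat -> Y) (G : nat -> nat -> set baire) k :
  full_fun R Y A (fun x => outv R Y c G (nearS k x) k).
Proof.
split.
  apply: (@sub_finite_set _ _ (c @` `I_(k.+2))); last exact: finite_image.
  move=> _ [x Ax <-]; exists (Jf G (nearS k x) k (Mk R Y c G (nearS k x) k)) => //.
  by rewrite /= /Jf ltnS find_iota_le.
move=> v _; exists ((2:R)^-1 ^+ k); split; first by rewrite exprn_gt0 // q_gt0.
move=> x [Ax /= hx] y Ay dxy; split => //=.
by rewrite -(nearS_agree k x y (dist_agree R x y k dxy)).
Qed.

Theorem mainTheorem14 (R : realType) (Y : pseudoMetricType R)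
  (hY : hausdorff_space Y) (sepY : separable Y)
  (A : set baire) (f : baire -> Y) :
  baire_class1 R Y A f ->
  exists fk : nat -> baire -> Y,
    (forall k, full_fun R Y A (fk k)) /\
    (forall x, A x -> fk k x @[k --> \oo] --> f x).
Proof.
move=> hf.
pose y0 := f (fun _ => 0%N).
have [D [cD dD]] := sepY.
have [g ginj] := (countable_injP D) cD.
pose e n := match pselect (exists y, D y /\ g y = n) with
  | left h => projT1 (cid h) | right _ => y0 end.
have eD : forall d, D d -> exists i, e i = d.
  move=> d Dd; exists (g d); rewrite /e; case: pselect => [h|nh].
    case: (cid h) => y [Dy gy] /=.
    by apply: ginj => //; rewrite inE.
  by exfalso; apply: nh; exists d.
pose q := (2:R)^-1.
pose U i M := interior (ball (e i) (q ^+ M)).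
pose F i M := projT1 (cid (hf (U i M) (@open_interior _ _))).
have hF : forall i M, (forall n, F i M n `<=` A /\ rel_closed R A (F i M n)) /\
    A `&` f @^-1` U i M = \bigcup_n F i M n.
  by move=> i M; rewrite /F; case: cid.
pose dec j : nat * nat := odflt (0%N, 0%N) (unpickle j).
pose G M j := F (dec j).1 M (dec j).2.
pose c j := e (dec j).1.
exists (fun k x => outv R Y c G (nearS k x) k); split.
  by move=> k; exact: full_main.
move=> x Ax; apply: (conv_main R Y A f c G x Ax).
- by move=> M j; exact: (hF _ _).1.
- move=> M.
  have q0 : 0 < q by rewrite invr_gt0.
  have O0 : (interior (ball (f x) (q ^+ M.+1))) (f x).
    by apply: nbhsx_ballx; rewrite exprn_gt0.
  have [d [Od Dd]] := dD _ (ex_intro _ _ O0) (@open_interior _ _).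
  have [i ei] := eD d Dd.
  have hU : U i M (f x).
    rewrite /U /interior /= ei.
    apply/nbhs_ballP; exists (q ^+ M.+1); first by rewrite /= exprn_gt0.
    move=> z hz; have := ball_triangle (ball_sym (interior_subset Od)) hz.
    apply: le_ball; rewrite exprS /q; have : 0 <= q ^+ M by rewrite exprn_ge0 // ltW.
    rewrite /q; lra.
  have : (A `&` f @^-1` U i M) x by split.
  rewrite (hF i M).2 => -[n _ Fx].
  exists (pickle (i, n)); by rewrite /G /dec pickleK.
- move=> M j Gj; rewrite /c.
  have : (A `&` f @^-1` U (dec j).1 M) x by rewrite (hF _ _).2; exists (dec j).2.
  by case=> _ /= /interior_subset.
Qed.
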